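(* Let $\Omega_1,\dots,\Omega_K$ be linear subspaces of $\mathbb{R}^n$ whose sum is $\mathbb{R}^n$. For each $k=1,\dots,K$ let $W_k$ be a matrix with rows $w_{k,1},\dots,w_{k,N_k}$, all lying in $\Omega_k$, such that $W_k$ has a directed spanning set of $\Omega_k$ with respect to every $x \in \Omega_k$. Let $W$ be the matrix obtained by stacking the rows of $W_1,\dots,W_K$. Then $W$ has a directed spanning set of $\mathbb{R}^n$ with respect to every $x \in \mathbb{R}^n$.
   Context: A matrix $W$ with rows $w_i \in \mathbb{R}^n$ has a directed spanning set (DSS) of a subspace $\Omega\subset\mathbb{R}^n$ with respect to $x \in \mathbb{R}^n$ if there is a collection of rows $w_i$ of $W$ with $\langle x, w_i\rangle \geq 0$ for each of them and whose span contains $\Omega$. *)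

(* Defs.v *)
From HB Require Import structures.
From mathcomp Require Import all_boot all_order all_algebra.
Set Implicit Arguments. Unset Strict Implicit. Unset Printing Implicit Defensive.
Import Order.TTheory GRing.Theory Num.Theory.
Local Open Scope ring_scope.

(* Vectors of R^n are row vectors 'rV[R]_n; a linear subspace of R^n is
   represented (as in mxalgebra) by the row space of a matrix.
   Standard inner product <x, w> = \sum_j x_j w_j. *)
Definition dotv (R : realFieldType) (n : nat) (x w : 'rV[R]_n) : R :=
  \sum_(j < n) x 0 j * w 0 j.

Definition has_dss (R : realFieldType) (n N : nat) (W : 'M[R]_(N, n))
    (Om : 'M[R]_n) (x : 'rV[R]_n) : Prop :=
  exists S : {set 'I_N},
    (forall i, i \in S -> 0 <= dotv x (row i W)) /\
    (Om <= (\sum_(i in S) <<row i W>>))%MS.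

(* Main.v *)
Require Import Defs.
From HB Require Import structures.
From mathcomp Require Import all_boot all_order all_algebra.
Import Order.TTheory GRing.Theory Num.Theory.
Local Open Scope ring_scope.

Lemma dotvE (R : realFieldType) (n : nat) (x w : 'rV[R]_n) :
  dotv x w = (x *m w^T) 0 0.
Proof. by rewrite mxE; apply: eq_bigr => j _; rewrite mxE. Qed.

Lemma sqmx_eq0 (R : realFieldType) (n : nat) (u : 'rV[R]_n) :
  u *m u^T = 0 -> u = 0.
Proof.
move=> /(congr1 (fun M : 'M_1 => M 0 0)); rewrite -dotvE mxE /dotv => H.
have : forall j, true -> u 0 j * u 0 j = 0.
  apply/psumr_eq0P => // j _; by rewrite -expr2 sqr_ge0.
move=> H2; apply/rowP => j; rewrite mxE.
by have /eqP := H2 j isT; rewrite mulf_eq0 orbb => /eqP.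
Qed.

Lemma proj_exists (R : realFieldType) (n : nat) (A : 'M[R]_n) (x : 'rV[R]_n) :
  exists2 y : 'rV[R]_n, (y <= A)%MS & forall w, (w <= A)%MS -> dotv x w = dotv y w.
Proof.
set B := row_base A.
set G := B *m B^T.
have uG : G \in unitmx.
  rewrite unitmxE unitfE; apply/negP => /det0P [v vn0 vG].
  have : (v *m B) *m (v *m B)^T = 0.
    by rewrite trmx_mul mulmxA -(mulmxA v) -/G vG mul0mx.
  move/sqmx_eq0/eqP; rewrite mulmx_free_eq0 ?row_base_free //.
  by apply/negP.
exists (x *m B^T *m invmx G *m B).
  by apply: submx_trans (submxMl _ _) _; rewrite eq_row_base.
have key : x *m B^T *m invmx G *m B *m B^T = x *m B^T.
  by rewrite -(mulmxA _ B) -/G mulmxKV.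
move=> w; rewrite -(eq_row_base A) -/B => /submxP [d ->].
by rewrite !dotvE trmx_mul !(mulmxA _ B^T) key.
Qed.

Theorem lemma2 (R : realFieldType) (n K : nat) (Om : 'I_K -> 'M[R]_n)
    (N : 'I_K -> nat) (Wk : forall k : 'I_K, 'M[R]_(N k, n)) :
  ((\sum_(k < K) Om k)%MS == 1%:M)%MS ->
  (forall k (i : 'I_(N k)), (row i (Wk k) <= Om k)%MS) ->
  (forall k (x : 'rV[R]_n), (x <= Om k)%MS -> has_dss (Wk k) (Om k) x) ->
  forall x : 'rV[R]_n, has_dss (\mxcol_(k < K) Wk k) 1%:M x.
Proof.
move=> Hsum Hrow Hdss x.
set W := \mxcol_(k < K) Wk k.
have rowRank : forall k (j : 'I_(N k)), row (tagnat.Rank k j) W = row j (Wk k).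
  move=> k j; rewrite /W row_mxcol /tagnat.sig1 /tagnat.sig2 /tagnat.Rank /=.
  by rewrite tagnat.rankK.
exists [set i | 0 <= dotv x (row i W)]; split; first by move=> i; rewrite inE.
case/andP: Hsum => _ H1; apply: submx_trans H1 _.
apply/sumsmx_subP => k _.
have [y Hy Hyx] := @proj_exists _ _ (Om k) x.
have [Sk [Hpos Hsub]] := Hdss k y Hy.
apply: submx_trans Hsub _.
apply/sumsmx_subP => j Hj.
apply: (sumsmx_sup (tagnat.Rank k j)).
  by rewrite inE rowRank Hyx ?Hrow ?Hpos.
by rewrite !genmxE rowRank.
Qed.
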